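(* Let $\mathcal B$ be an extriangulated category with enough injectives. If a subcategory $\mathcal C$ is rigid, closed under direct summands and fully contravariantly finite, then $(\mathcal C,\mathcal C^{\perp_1})$ is a cotorsion pair.
   Context: $(\mathcal B,\mathbb E,\mathfrak s)$ is an extriangulated category (Nakaoka–Palu); conflations $A\rightarrowtail B\twoheadrightarrow C$. Subcategories are full, additive, closed under isomorphisms and finite direct sums. $\mathcal C^{\perp_1}=\{B\mid \mathbb E(\mathcal C,B)=0\}$; $\mathcal C$ is rigid if $\mathbb E(\mathcal C,\mathcal C)=0$. $\mathcal C$ is fully contravariantly finite if every object admits a right $\mathcal C$-approximation which is a deflation. A cotorsion pair $(\mathcal U,\mathcal V)$ is a pair of subcategories closed under direct summands with $\mathbb E(\mathcal U,\mathcal V)=0$ such that every $B$ admits conflations $V_B\rightarrowtail U_B\twoheadrightarrow B$ and $B\rightarrowtail V^B\twoheadrightarrow U^B$ with $U_B,U^B\in\mathcal U$, $V_B,V^B\in\mathcal V$. *)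

(* Defs.v *)
From mathcomp Require Import all_boot all_algebra.
Set Implicit Arguments.
Unset Strict Implicit.
Unset Printing Implicit Defensive.
Import GRing.Theory.
Local Open Scope ring_scope.

(* ---------- Preadditive category data (composition is diagrammatic:
   [cmp f g] is "first f, then g", i.e. g o f). ---------- *)
Record CatData := {
  Obj :> Type;
  Hom : Obj -> Obj -> zmodType;
  cmp : forall A B C : Obj, Hom A B -> Hom B C -> Hom A C;
  idm : forall A : Obj, Hom A A;
  zobj : Obj;
  bp  : Obj -> Obj -> Obj;
  bi1 : forall A B : Obj, Hom A (bp A B);
  bi2 : forall A B : Obj, Hom B (bp A B);
  bp1 : forall A B : Obj, Hom (bp A B) A;
  bp2 : forall A B : Obj, Hom (bp A B) B
}.

Arguments Hom {c}.
Arguments cmp {c A B C}.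
Arguments idm {c}.
Arguments zobj {c}.
Arguments bp {c}.
Arguments bi1 {c}.
Arguments bi2 {c}.
Arguments bp1 {c}.
Arguments bp2 {c}.

Definition is_additive (X : CatData) : Prop :=
  (forall (A B C D : X) (f : Hom A B) (g : Hom B C) (h : Hom C D),
         cmp f (cmp g h) = cmp (cmp f g) h) /\
  (forall (A B : X) (f : Hom A B), cmp (idm A) f = f) /\
  (forall (A B : X) (f : Hom A B), cmp f (idm B) = f) /\
  (forall (A B C : X) (f f' : Hom A B) (g : Hom B C),
         cmp (f + f') g = cmp f g + cmp f' g) /\
  (forall (A B C : X) (f : Hom A B) (g g' : Hom B C),
         cmp f (g + g') = cmp f g + cmp f g') /\
  idm (@zobj X) = 0 /\
  (forall A B : X,
        [/\ cmp (bi1 A B) (bp1 A B) = idm A,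
            cmp (bi2 A B) (bp2 A B) = idm B,
            cmp (bi1 A B) (bp2 A B) = 0,
            cmp (bi2 A B) (bp1 A B) = 0 &
            cmp (bp1 A B) (bi1 A B) + cmp (bp2 A B) (bi2 A B) = idm (bp A B)]).

Definition is_iso {X : CatData} {A B : X} (f : Hom A B) : Prop :=
  exists g : Hom B A, cmp f g = idm A /\ cmp g f = idm B.

Definition isomorphic {X : CatData} (A B : X) : Prop :=
  exists f : Hom A B, is_iso f.

Definition summap {X : CatData} {A A' B B' : X} (x : Hom A B) (x' : Hom A' B')
  : Hom (bp A A') (bp B B') :=
  cmp (cmp (bp1 A A') x) (bi1 B B') + cmp (cmp (bp2 A A') x') (bi2 B B').

(* ---------- Extriangulated data: the bifunctor E and the realization s.
   [Ext C A] is E(C,A); [pf a d] is a_* d; [pb c d] is c^* d;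
   [real d x y] means that  A -x-> B -y-> C  belongs to the class s(d). *)
Record ExtriData (X : CatData) := {
  Ext : X -> X -> zmodType;
  pf : forall C A A' : X, Hom A A' -> Ext C A -> Ext C A';
  pb : forall C' C A : X, Hom C' C -> Ext C A -> Ext C' A;
  real : forall A B C : X, Ext C A -> Hom A B -> Hom B C -> Prop
}.

Arguments Ext {X} e.
Arguments pf {X} e {C A A'}.
Arguments pb {X} e {C' C A}.
Arguments real {X} e {A B C}.

Definition extsum {X : CatData} (D : ExtriData X) {A A' C C' : X}
  (d : Ext D C A) (d' : Ext D C' A') : Ext D (bp C C') (bp A A') :=
  pf D (bi1 A A') (pb D (bp1 C C') d) + pf D (bi2 A A') (pb D (bp2 C C') d').

Definition is_extriangulated {X : CatData} (D : ExtriData X) : Prop :=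
  [/\
  ((forall (C A A' : X) (a : Hom A A') (d d' : Ext D C A),
         pf D a (d + d') = pf D a d + pf D a d') /\
      (forall (C A A' : X) (a a' : Hom A A') (d : Ext D C A),
         pf D (a + a') d = pf D a d + pf D a' d) /\
      (forall (C A : X) (d : Ext D C A), pf D (idm A) d = d) /\
      (forall (C A A' A'' : X) (a : Hom A A') (a' : Hom A' A'') (d : Ext D C A),
         pf D (cmp a a') d = pf D a' (pf D a d)) /\
      (forall (C' C A : X) (c : Hom C' C) (d d' : Ext D C A),
         pb D c (d + d') = pb D c d + pb D c d') /\
      (forall (C' C A : X) (c c' : Hom C' C) (d : Ext D C A),
         pb D (c + c') d = pb D c d + pb D c' d) /\
      (forall (C A : X) (d : Ext D C A), pb D (idm C) d = d) /\
      (forall (C'' C' C A : X) (c' : Hom C'' C') (c : Hom C' C) (d : Ext D C A),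
         pb D (cmp c' c) d = pb D c' (pb D c d)) /\
      (forall (C' C A A' : X) (c : Hom C' C) (a : Hom A A') (d : Ext D C A),
         pf D a (pb D c d) = pb D c (pf D a d))),
  (* s is a realization: each s(d) is a nonempty equivalence class of
     sequences, and morphisms of extensions are realized *)
  [/\ (forall (A C : X) (d : Ext D C A),
         exists (B : X) (x : Hom A B) (y : Hom B C), real D d x y),
      (forall (A B B' C : X) (d : Ext D C A) (x : Hom A B) (y : Hom B C)
              (x' : Hom A B') (y' : Hom B' C),
         real D d x y ->
         (real D d x' y' <->
          exists b : Hom B B', [/\ is_iso b, cmp x b = x' & cmp b y' = y])) &
      (forall (A B C A' B' C' : X) (d : Ext D C A) (d' : Ext D C' A')
              (x : Hom A B) (y : Hom B C) (x' : Hom A' B') (y' : Hom B' C')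
              (a : Hom A A') (c : Hom C C'),
         real D d x y -> real D d' x' y' -> pf D a d = pb D c d' ->
         exists b : Hom B B', cmp x b = cmp a x' /\ cmp b y' = cmp y c)],
  (* (ET2) additivity of the realization *)
  (forall A C : X, real D (0 : Ext D C A) (bi1 A C) (bp2 A C)) /\
  (forall (A B C A' B' C' : X) (d : Ext D C A) (d' : Ext D C' A')
          (x : Hom A B) (y : Hom B C) (x' : Hom A' B') (y' : Hom B' C'),
     real D d x y -> real D d' x' y' ->
     real D (extsum d d') (summap x x') (summap y y')),
  (* (ET3) and (ET3)^op *)
  (forall (A B C A' B' C' : X) (d : Ext D C A) (d' : Ext D C' A')
          (x : Hom A B) (y : Hom B C) (x' : Hom A' B') (y' : Hom B' C')
          (a : Hom A A') (b : Hom B B'),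
     real D d x y -> real D d' x' y' -> cmp x b = cmp a x' ->
     exists c : Hom C C', cmp b y' = cmp y c /\ pf D a d = pb D c d') /\
  (forall (A B C A' B' C' : X) (d : Ext D C A) (d' : Ext D C' A')
          (x : Hom A B) (y : Hom B C) (x' : Hom A' B') (y' : Hom B' C')
          (b : Hom B B') (c : Hom C C'),
     real D d x y -> real D d' x' y' -> cmp b y' = cmp y c ->
     exists a : Hom A A', cmp x b = cmp a x' /\ pf D a d = pb D c d') &
  (* (ET4) and (ET4)^op *)
  (forall (A B D0 C F : X) (f : Hom A B) (f' : Hom B D0) (g : Hom B C)
          (g' : Hom C F) (d : Ext D D0 A) (d' : Ext D F B),
     real D d f f' -> real D d' g g' ->
     exists (E : X) (h' : Hom C E) (dd : Hom D0 E) (e : Hom E F)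
            (d'' : Ext D E A),
       real D d'' (cmp f g) h' /\ cmp f' dd = cmp g h' /\ cmp h' e = g' /\
       real D (pf D f' d') dd e /\ pb D dd d'' = d /\ pf D f d'' = pb D e d') /\
  (forall (D0 A B F C : X) (f' : Hom D0 A) (f : Hom A B) (g' : Hom F B)
          (g : Hom B C) (d : Ext D B D0) (d' : Ext D C F),
     real D d f' f -> real D d' g' g ->
     exists (E : X) (dd : Hom D0 E) (e : Hom E F) (h' : Hom E A)
            (d'' : Ext D C E),
       real D d'' h' (cmp f g) /\ cmp dd h' = f' /\ cmp e g' = cmp h' f /\
       real D (pb D g' d) dd e /\ pf D e d'' = d' /\ pf D dd d = pb D g d'')
  ].

Section Notions.
Context {X : CatData} (D : ExtriData X).

Definition conflation {A B C : X} (x : Hom A B) (y : Hom B C) : Prop :=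
  exists d : Ext D C A, real D d x y.

Definition deflation {B C : X} (y : Hom B C) : Prop :=
  exists (A : X) (x : Hom A B), conflation x y.

Definition injective_obj (I : X) : Prop :=
  forall (A B C : X) (x : Hom A B) (y : Hom B C), conflation x y ->
  forall a : Hom A I, exists b : Hom B I, cmp x b = a.

Definition enough_injectives : Prop :=
  forall A : X, exists (I C : X) (x : Hom A I) (y : Hom I C),
    conflation x y /\ injective_obj I.

(* subcategories: given by a predicate on objects; by the standing
   convention they are full, additive (contain a zero object), closed under
   isomorphisms and finite direct sums *)
Definition subcategory (P : X -> Prop) : Prop :=
  [/\ P zobj,
      (forall A B : X, isomorphic A B -> P A -> P B) &
      (forall A B : X, P A -> P B -> P (bp A B))].

Definition closed_summands (P : X -> Prop) : Prop :=
  forall M A B : X, P M -> isomorphic M (bp A B) -> P A.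

Definition rigid (P : X -> Prop) : Prop :=
  forall C C' : X, P C -> P C' -> forall d : Ext D C C', d = 0.

Definition perp1 (P : X -> Prop) (B : X) : Prop :=
  forall C : X, P C -> forall d : Ext D C B, d = 0.

Definition fully_contravariantly_finite (P : X -> Prop) : Prop :=
  forall B : X, exists (C0 : X) (f : Hom C0 B),
    [/\ P C0, deflation f &
        forall (C' : X) (g : Hom C' B), P C' -> exists h : Hom C' C0, cmp h f = g].

Definition cotorsion_pair (U V : X -> Prop) : Prop :=
  subcategory U /\ subcategory V /\ closed_summands U /\ closed_summands V /\
      (forall A B : X, U A -> V B -> forall d : Ext D A B, d = 0) /\
      (forall B : X, exists (VB UB : X) (x : Hom VB UB) (y : Hom UB B),
          [/\ V VB, U UB & conflation x y]) /\
      (forall B : X, exists (VB UB : X) (x : Hom B VB) (y : Hom VB UB),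
          [/\ V VB, U UB & conflation x y]).

End Notions.

(* Main.v *)
Require Import Defs.
From mathcomp Require Import all_boot all_algebra.
Set Implicit Arguments.
Unset Strict Implicit.
Import GRing.Theory.
Local Open Scope ring_scope.


Lemma pf0 (X : CatData) (D : ExtriData X) (HD : is_extriangulated D)
  (C A A' : X) (a : Defs.Hom A A') : pf D a (0 : Ext D C A) = 0.
Proof.
case: HD => [[pfD [pfDa [pfid [pfcmp [pbD [pbDa [pbid [pbcmp pfpb]]]]]]]] [rex req rmor] [r0 rsum] [et3 et3op] [et4 et4op]]; have h := pfD C _ _ a 0 0; rewrite addr0 in h.
by apply: (@addrI _ (pf D a 0)); rewrite addr0 -h.
Qed.

Lemma pfa0 (X : CatData) (D : ExtriData X) (HD : is_extriangulated D)
  (C A A' : X) (d : Ext D C A) : pf D (0 : Defs.Hom A A') d = 0.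
Proof.
case: HD => [[pfD [pfDa [pfid [pfcmp [pbD [pbDa [pbid [pbcmp pfpb]]]]]]]] [rex req rmor] [r0 rsum] [et3 et3op] [et4 et4op]]; have h := pfDa C A A' 0 0 d; rewrite addr0 in h.
by apply: (@addrI _ (pf D 0 d)); rewrite addr0 -h.
Qed.

Lemma pb0 (X : CatData) (D : ExtriData X) (HD : is_extriangulated D)
  (C' C A : X) (c : Defs.Hom C' C) : pb D c (0 : Ext D C A) = 0.
Proof.
case: HD => [[pfD [pfDa [pfid [pfcmp [pbD [pbDa [pbid [pbcmp pfpb]]]]]]]] [rex req rmor] [r0 rsum] [et3 et3op] [et4 et4op]]; have h := pbD _ _ A c 0 0; rewrite addr0 in h.
by apply: (@addrI _ (pb D c 0)); rewrite addr0 -h.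
Qed.

Lemma split0 (X : CatData) (HX : is_additive X) (D : ExtriData X)
  (HD : is_extriangulated D) (C E C' : X) (dd : Defs.Hom C E) (e : Defs.Hom E C') :
  real D (0 : Ext D C' C) dd e -> exists s : Defs.Hom C' E, cmp s e = idm C'.
Proof.
move=> H; have HD' := HD; case: HD' => [[pfD [pfDa [pfid [pfcmp [pbD [pbDa [pbid [pbcmp pfpb]]]]]]]] [rex req rmor] [r0 rsum] [et3 et3op] [et4 et4op]]; case: HX => [assoc [idl [idr [cmpDl [cmpDr [z0 bpax]]]]]].
have [b [_ h1 h2]] := (req _ _ _ _ _ _ _ _ _ (r0 C C')).1 H.
exists (cmp (bi2 C C') b); rewrite -assoc h2.
by case: (bpax C C').
Qed.

Lemma pb_y0 (X : CatData) (D : ExtriData X) (HD : is_extriangulated D)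
  (A B C : X) (d : Ext D C A) (x : Defs.Hom A B) (y : Defs.Hom B C) :
  real D d x y -> pb D y d = 0.
Proof.
move=> rd; have HD' := HD; case: HD' => [[pfD [pfDa [pfid [pfcmp [pbD [pbDa [pbid [pbcmp pfpb]]]]]]]] [rex req rmor] [r0 rsum] [et3 et3op] [et4 et4op]].
have [a [_ h]] := et3op _ _ _ _ _ _ _ _ _ _ _ _ (bp2 A B) y (r0 A B) rd erefl.
by rewrite -h (pf0 HD).
Qed.

Lemma pf_x0 (X : CatData) (D : ExtriData X) (HD : is_extriangulated D)
  (A B C : X) (d : Ext D C A) (x : Defs.Hom A B) (y : Defs.Hom B C) :
  real D d x y -> pf D x d = 0.
Proof.
move=> rd; have HD' := HD; case: HD' => [[pfD [pfDa [pfid [pfcmp [pbD [pbDa [pbid [pbcmp pfpb]]]]]]]] [rex req rmor] [r0 rsum] [et3 et3op] [et4 et4op]].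
have [c [_ h]] := et3 _ _ _ _ _ _ _ _ _ _ _ _ x (bi1 B C) rd (r0 B C) erefl.
by rewrite h (pb0 HD).
Qed.

Lemma exact_mid (X : CatData) (HX : is_additive X) (D : ExtriData X)
  (HD : is_extriangulated D) (A B C C' : X) (d : Ext D C A) (x : Defs.Hom A B)
  (y : Defs.Hom B C) (th : Ext D C' B) :
  real D d x y -> pf D y th = 0 -> exists eta : Ext D C' A, pf D x eta = th.
Proof.
move=> rd H; have HD' := HD; case: HD' => [[pfD [pfDa [pfid [pfcmp [pbD [pbDa [pbid [pbcmp pfpb]]]]]]]] [rex req rmor] [r0 rsum] [et3 et3op] [et4 et4op]].
have [M [f [g rth]]] := rex _ _ th.
have [E [h' [dd [e [d'' [r1 [_ [_ [r2 [_ h6]]]]]]]]]] :=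
  et4 _ _ _ _ _ x y f g d th rd rth.
rewrite H in r2; have [s hs] := split0 HX HD r2.
by exists (pb D s d''); rewrite pfpb h6 -pbcmp hs pbid.
Qed.

Lemma exact_first (X : CatData) (HX : is_additive X) (D : ExtriData X)
  (HD : is_extriangulated D) (A B C C' : X) (d : Ext D C A) (x : Defs.Hom A B)
  (y : Defs.Hom B C) (th : Ext D C' A) :
  real D d x y -> pf D x th = 0 -> exists c : Defs.Hom C' C, pb D c d = th.
Proof.
move=> rd H; have HD' := HD; case: HD' => [[pfD [pfDa [pfid [pfcmp [pbD [pbDa [pbid [pbcmp pfpb]]]]]]]] [rex req rmor] [r0 rsum] [et3 et3op] [et4 et4op]]; case: HX => [assoc [idl [idr [cmpDl [cmpDr [z0 bpax]]]]]].
have [M [f [g rth]]] := rex _ _ th.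
have [b [hb1 _]] : exists b : Defs.Hom M (bp B C'), cmp f b = cmp x (bi1 B C') /\ cmp b (bp2 B C') = cmp g (idm C').
  by apply: (rmor _ _ _ _ _ _ _ _ _ _ _ _ x (idm C') rth (r0 B C')); rewrite pbid H.
have [c [_ hc]] : exists c : Defs.Hom C' C, cmp (cmp b (bp1 B C')) y = cmp g c /\ pf D (idm A) th = pb D c d.
  apply: (et3 _ _ _ _ _ _ _ _ _ _ _ _ (idm A) (cmp b (bp1 B C')) rth rd).
  by rewrite assoc hb1 -assoc; case: (bpax B C') => -> *; rewrite idr idl.
by exists c; rewrite -hc pfid.
Qed.

Lemma inj_ext0 (X : CatData) (D : ExtriData X) (HD : is_extriangulated D)
  (I C : X) : injective_obj D I -> forall d : Ext D C I, d = 0.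
Proof.
move=> hI d; have HD' := HD; case: HD' => [[pfD [pfDa [pfid [pfcmp [pbD [pbDa [pbid [pbcmp pfpb]]]]]]]] [rex req rmor] [r0 rsum] [et3 et3op] [et4 et4op]].
have [M [x [y rd]]] := rex _ _ d.
have [b hb] := hI _ _ _ x y (ex_intro _ d rd) (idm I).
by rewrite -(pfid _ _ d) -hb pfcmp (pf_x0 HD rd) (pf0 HD).
Qed.

Lemma perp1_iso (X : CatData) (D : ExtriData X) (HD : is_extriangulated D)
  (P : X -> Prop) (A B : X) : isomorphic A B -> perp1 D P A -> perp1 D P B.
Proof.
move=> [f [g [h1 h2]]] hA C PC d; have HD' := HD; case: HD' => [[pfD [pfDa [pfid [pfcmp [pbD [pbDa [pbid [pbcmp pfpb]]]]]]]] [rex req rmor] [r0 rsum] [et3 et3op] [et4 et4op]].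
by rewrite -(pfid _ _ d) -h2 pfcmp (hA C PC (pf D g d)) (pf0 HD).
Qed.

Theorem mainTheorem4 (X : CatData) (HX : is_additive X)
  (D : ExtriData X) (HD : is_extriangulated D)
  (Hinj : enough_injectives D)
  (P : X -> Prop) (HP : subcategory P)
  (Hrig : rigid D P) (Hsum : closed_summands P)
  (Hfin : fully_contravariantly_finite D P) :
  cotorsion_pair D P (perp1 D P).
Proof.
have HD' := HD; have HX' := HX; case: HD' => [[pfD [pfDa [pfid [pfcmp [pbD [pbDa [pbid [pbcmp pfpb]]]]]]]] [rex req rmor] [r0 rsum] [et3 et3op] [et4 et4op]]; case: HX' => [assoc [idl [idr [cmpDl [cmpDr [z0 bpax]]]]]].
split; first exact: HP.
split.
  split.
  - by move=> C PC d; rewrite -(pfid _ _ d) z0 (pfa0 HD).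
  - by move=> A B; apply: perp1_iso.
  - move=> A B hA hB C PC d.
    case: (bpax A B) => _ _ _ _ h5.
    rewrite -(pfid _ _ d) -h5 pfDa !pfcmp (hA C PC (pf D _ d)) (hB C PC (pf D _ d)).
    by rewrite !(pf0 HD) addr0.
split; first exact: Hsum.
split.
  move=> M A B hM hiso C PC d.
  have hAB := perp1_iso HD hiso hM.
  case: (bpax A B) => h1 _ _ _ _.
  by rewrite -(pfid _ _ d) -h1 pfcmp (hAB C PC (pf D _ d)) (pf0 HD).
split; first by move=> A B PA hB d; apply: hB.
split.
  move=> B; have [C0 [f [PC0 [A [x [d rd]]] appr]]] := Hfin B.
  exists A, C0, x, f; split => //; last by exists d.
  move=> C' PC' th.
  have [c hc] := exact_first HX HD rd (Hrig C' C0 PC' PC0 (pf D x th)).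
  have [h hh] := appr C' c PC'.
  by rewrite -hc -hh pbcmp (pb_y0 HD rd) (pb0 HD).
move=> B; have [I [C [i [p [[e re] injI]]]]] := Hinj B.
have [C0 [y [PC0 _ appr]]] := Hfin C.
have [V [v [w reps]]] := rex _ _ (pb D y e).
have [b [hb1 hb2]] := rmor _ _ _ _ _ _ _ _ _ _ _ _ (idm B) y reps re (pfid _ _ _).
exists V, C0, v, w; split => //; last by exists (pb D y e).
move=> C' PC' th.
have [eta heta] := exact_mid HX HD reps (Hrig C' C0 PC' PC0 (pf D w th)).
have hi : pf D i eta = 0.
  by rewrite -(idl _ _ i) -hb1 pfcmp heta; apply: (inj_ext0 HD injI).
have [c hc] := exact_first HX HD re hi.
have [h hh] := appr C' c PC'.
by rewrite -heta -hc -hh pbcmp pfpb (pf_x0 HD reps) (pb0 HD).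
Qed.
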